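(* Let $S[1..n]$ be a string and let $i,j,x,y$ be integers with $1\le i<j\le x\le y\le n$. If $\mathrm{LLR}_j$ does not exist, or exists but does not cover the interval $[x..y]$, then $\mathrm{LLR}_i$ does not exist or does not cover $[x..y]$.
   Context: For $1\le i\le j\le n$, $S[i..j]=S[i]\cdots S[j]$. A substring $S[i..j]$ covers $[x..y]$ if $i\le x\le y\le j$. A substring $S[i..j]$ is unique if there is no other substring $S[i'..j']$ with $S[i'..j']=S[i..j]$ and $i'\ne i$; it is a repeat otherwise. The left-bounded longest repeat starting at position $k$, $\mathrm{LLR}_k$, is a repeat $S[k..j]$ such that either $j=n$ or $S[k..j+1]$ is unique; it does not exist if $S[k]$ (the single character) is unique. *)

(* Defs.v *)
(* Strings are sequences over an eqType alphabet; positions are 1-based. *)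
From mathcomp Require Import all_boot.
Set Implicit Arguments. Unset Strict Implicit. Unset Printing Implicit Defensive.

Section Strings.
Variable T : eqType.
Implicit Types (S : seq T) (i j k : nat).

Definition occ S i j : bool := (1 <= i) && (i <= j) && (j <= size S).

Definition substr S i j : seq T := take (j - i + 1) (drop (i - 1) S).

Definition is_repeat S i j : Prop :=
  occ S i j /\ exists i' j', [/\ occ S i' j', i' != i & substr S i' j' = substr S i j].

Definition is_unique S i j : Prop := occ S i j /\ ~ is_repeat S i j.

Definition is_LLR S k j : Prop :=
  is_repeat S k j /\ (j = size S \/ is_unique S k j.+1).

Definition covers i j x y : Prop := (i <= x) && (x <= y) && (y <= j).

Definition LLR_covers S k x y : Prop := exists j, is_LLR S k j /\ covers k j x y.

End Strings.

(* Main.v *)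
Require Import Defs.
From mathcomp Require Import all_boot.
From Stdlib Require Import Classical.
From mathcomp Require Import zify.
Set Implicit Arguments. Unset Strict Implicit.

Lemma size_substr (T : eqType) (S : seq T) a b :
  occ S a b -> size (substr S a b) = b - a + 1.
Proof.
rewrite /occ /substr => /andP[/andP[h1 h2] h3].
rewrite size_take size_drop; case: ifP => //; lia.
Qed.

Lemma substr_shift (T : eqType) (S : seq T) a b d :
  1 <= a -> d <= b - a -> substr S (a + d) b = drop d (substr S a b).
Proof.
move=> ha hd; rewrite /substr.
have -> : a + d - 1 = d + (a - 1) by lia.
rewrite -drop_drop take_drop.
have -> : b - (a + d) + 1 + d = b - a + 1 by lia.
by [].
Qed.

Lemma repeat_suffix (T : eqType) (S : seq T) i j e :
  1 <= i -> i < j -> j <= e -> is_repeat S i e -> is_repeat S j e.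
Proof.
move=> hi hij hje [ho [i' [j' [ho' hne heq]]]].
have hsz := size_substr ho'; rewrite heq (size_substr ho) in hsz.
move: ho ho'; rewrite /occ => /andP[/andP[h1 h2] h3] /andP[/andP[h1' h2'] h3'].
split; first by rewrite /occ; apply/andP; split; [apply/andP; split|]; lia.
exists (i' + (j - i)), j'; split.
- rewrite /occ; apply/andP; split; [apply/andP; split|]; lia.
- apply/eqP; move/eqP: hne; lia.
- have hj : j = i + (j - i) by lia.
  rewrite [in RHS]hj (substr_shift _ hi); last by lia.
  rewrite (substr_shift _ h1'); last by lia.
  by rewrite heq.
Qed.

Lemma extend_LLR (T : eqType) (S : seq T) j :
  forall k e, k = size S - e -> is_repeat S j e ->
  exists e', e <= e' /\ is_LLR S j e'.
Proof.
elim=> [|k IH] e hk hr.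
- exists e; split => //; split => //; left.
  case: hr => /andP[_ h] _; lia.
- have he : e < size S by lia.
  case: (classic (is_repeat S j e.+1)) => h.
  + have [e' [h1 h2]] := IH e.+1 ltac:(lia) h.
    exists e'; split => //; lia.
  + exists e; split => //; split => //; right; split => //.
    case: hr => /andP[/andP[a b] c] _.
    rewrite /occ; apply/andP; split; [apply/andP; split|]; lia.
Qed.

Theorem lemma4 (T : eqType) (S : seq T) (i j x y : nat) :
  1 <= i -> i < j -> j <= x -> x <= y -> y <= size S ->
  ~ LLR_covers S j x y -> ~ LLR_covers S i x y.
Proof.
move=> hi hij hjx hxy hy hn [e [[hr _] hc]]; apply: hn.
move: hc; rewrite /covers => /andP[/andP[_ _] hye].
have hje : j <= e by lia.
have hr' := repeat_suffix hi hij hje hr.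
have [e' [h1 h2]] := extend_LLR (erefl (size S - e)) hr'.
exists e'; split => //; rewrite /covers; apply/andP; split; [apply/andP; split|]; lia.
Qed.
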